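(* Let $L\subseteq\Sigma^\omega$ be a prefix-independent language and let $\mathcal{B}$ be a history-deterministic generalised coBüchi automaton recognising $L$. Let $\mathcal{A}_{\min}$ be a nice, safe minimal and safe centralised history-deterministic coBüchi automaton recognising $L$, with safe components having state sets $S_1,\dots,S_k$, and let $n_{\max}=\max_{1\le i\le k}|S_i|$ (this is the number of states of the automaton $\mathcal{A}_{\mathrm{PI}}$, which has states $\{p_1,\dots,p_{n_{\max}}\}$, all transitions, and for each $i$ makes colour $i$ absent exactly on the image of the transitions of the $i$-th safe component under a fixed injection of $S_i$ into its states). Then $n_{\max}\le$ the number of states of $\mathcal{B}$.
   Context: An automaton is a tuple $(Q,\Sigma,q_{\mathrm{init}},\Delta,\Gamma,\mathrm{col},W)$ with finite state set, finite input alphabet $\Sigma$, initial state, transitions $\Delta\subseteq Q\times\Sigma\times Q$, output alphabet $\Gamma$, labelling $\mathrm{col}:\Delta\to\Gamma$, acceptance condition $W\subseteq\Gamma^\omega$. A run on $w=a_1a_2\cdots$ is a sequence $(q_0,a_1,q_1)(q_1,a_2,q_2)\cdots$ of transitions with $q_0=q_{\mathrm{init}}$, accepting if its label sequence is in $W$; $\mathcal{L}(\mathcal{A})$ is the set of words with an accepting run. With a finite colour set $C$ and $\Gamma=2^C$, generalised coBüchi means $W=\{x : \text{some } c\in C \text{ occurs in only finitely many letters of } x\}$; a coBüchi automaton is the case $C=\{1\}$, its coBüchi transitions being those labelled $\{1\}$. A resolver is a map $\sigma:\Sigma^+\to\Delta$ such that for every $w=a_0a_1\cdots$, $\sigma(a_0)\sigma(a_0a_1)\cdots$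 is a run on $w$, accepting whenever $w\in\mathcal{L}(\mathcal{A})$; history-deterministic means a resolver exists. $L$ is prefix-independent if for all $u\in\Sigma^*$, $w\in\Sigma^\omega$: $uw\in L\iff w\in L$. For a coBüchi automaton: $\mathcal{A}_{\mathrm{safe}}$ is obtained by deleting coBüchi transitions; a safe component is a strongly connected component of $\mathcal{A}_{\mathrm{safe}}$; the safe language of $q$ is the set of words with an infinite path from $q$ in $\mathcal{A}_{\mathrm{safe}}$; two states are equivalent if the automaton started from each recognises the same language. Semantically deterministic: $(q,a,p_1),(q,a,p_2)\in\Delta$ implies $p_1,p_2$ equivalent; normal form: transitions between different safe components are coBüchi transitions; safe deterministic: $\mathcal{A}_{\mathrm{safe}}$ deterministic; nice: all states reachable, semantically deterministic, normal form, safe deterministic. Safe centralised: equivalent states with inclusion-comparable safe languages lie in the same safe component; safe minimal: equivalent states with equal safe languages are equal. *)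

(* Defs.v *)
From mathcomp Require Import all_boot.
Set Implicit Arguments. Unset Strict Implicit. Unset Printing Implicit Defensive.

Definition word (Sigma : Type) := nat -> Sigma.
Definition language (Sigma : Type) := word Sigma -> Prop.

Definition prefix (Sigma : Type) (w : word Sigma) (n : nat) : seq Sigma := mkseq w n.

Definition prepend (Sigma : Type) (u : seq Sigma) (w : word Sigma) : word Sigma :=
  fun i => if i < size u then nth (w 0) u i else w (i - size u).

Definition prefix_independent (Sigma : Type) (L : language Sigma) : Prop :=
  forall (u : seq Sigma) (w : word Sigma), L (prepend u w) <-> L w.

Record gcb_aut (Sigma : finType) := GCB {
  gstate : finType;
  gcolour : finType;
  ginit : gstate;
  gdelta : gstate -> Sigma -> gstate -> bool;
  gcol : gstate -> Sigma -> gstate -> {set gcolour}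
}.

Section GCB.
Variables (Sigma : finType) (A : gcb_aut Sigma).

Definition g_run_from (q : gstate A) (w : word Sigma) (r : nat -> gstate A) : Prop :=
  r 0 = q /\ forall n, gdelta (r n) (w n) (r n.+1).

Definition g_accepting (w : word Sigma) (r : nat -> gstate A) : Prop :=
  exists c : gcolour A, exists N, forall n, N <= n -> c \notin gcol (r n) (w n) (r n.+1).

Definition g_accepts_from (q : gstate A) (w : word Sigma) : Prop :=
  exists r, g_run_from q w r /\ g_accepting w r.

Definition g_lang : language Sigma := g_accepts_from (ginit A).

Definition g_recognises (L : language Sigma) : Prop := forall w, g_lang w <-> L w.

(* A resolver sigma : Sigma^+ -> Delta (value on the empty word irrelevant);
   transitions are triples ((q, a), p). *)
Definition g_resolver (sigma : seq Sigma -> (gstate A * Sigma) * gstate A) : Prop :=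
  forall w : word Sigma,
    let t := fun n => sigma (prefix w n.+1) in
    (t 0).1.1 = ginit A /\
    (forall n, (t n).1.2 = w n /\ gdelta (t n).1.1 (t n).1.2 (t n).2
               /\ (t n).2 = (t n.+1).1.1) /\
    (g_lang w -> exists c : gcolour A, exists N, forall n, N <= n ->
        c \notin gcol (t n).1.1 (t n).1.2 (t n).2).

Definition g_history_deterministic : Prop := exists sigma, g_resolver sigma.
End GCB.

Record cb_aut (Sigma : finType) := CB {
  cstate : finType;
  cinit : cstate;
  cdelta : cstate -> Sigma -> cstate -> bool;
  cb : cstate -> Sigma -> cstate -> bool   (* label {1} iff cb, label {} otherwise *)
}.

Definition cb_to_gcb (Sigma : finType) (A : cb_aut Sigma) : gcb_aut Sigma :=
  @GCB Sigma (cstate A) unit (cinit A) (@cdelta Sigma A)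
       (fun q a p => if cb q a p then [set: unit] else set0).

Section CB.
Variables (Sigma : finType) (A : cb_aut Sigma).
Local Notation Q := (cstate A).
Local Notation G := (cb_to_gcb A).

Definition c_recognises (L : language Sigma) := g_recognises G L.
Definition c_history_deterministic := g_history_deterministic G.

Definition c_lang_from (q : Q) : language Sigma := @g_accepts_from Sigma G q.

Definition c_equiv (p q : Q) : Prop := forall w, c_lang_from p w <-> c_lang_from q w.

Definition safe_edge (p q : Q) : bool := [exists a, cdelta p a q && ~~ cb p a q].

Definition same_safe_comp (p q : Q) : bool :=
  connect safe_edge p q && connect safe_edge q p.

Definition safe_comp (q : Q) : {set Q} := [set p | same_safe_comp q p].

Definition safe_lang (q : Q) : language Sigma :=
  fun w => exists r : nat -> Q, r 0 = q /\
    forall n, cdelta (r n) (w n) (r n.+1) && ~~ cb (r n) (w n) (r n.+1).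

Definition all_reachable : Prop :=
  forall q : Q, connect (fun p p' : Q => [exists a, cdelta p a p']) (cinit A) q.

Definition semantically_deterministic : Prop :=
  forall (q : Q) (a : Sigma) (p1 p2 : Q), cdelta q a p1 -> cdelta q a p2 -> c_equiv p1 p2.

Definition normal_form : Prop :=
  forall (p : Q) (a : Sigma) (q : Q), cdelta p a q -> ~~ same_safe_comp p q -> cb p a q.

Definition safe_deterministic : Prop :=
  forall (p : Q) (a : Sigma) (q1 q2 : Q), cdelta p a q1 -> ~~ cb p a q1 -> cdelta p a q2 -> ~~ cb p a q2 ->
    q1 = q2.

Definition nice : Prop :=
  all_reachable /\ semantically_deterministic /\ normal_form /\ safe_deterministic.

Definition lang_incl (L1 L2 : language Sigma) : Prop := forall w, L1 w -> L2 w.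

Definition safe_centralised : Prop :=
  forall p q : Q, c_equiv p q ->
    (lang_incl (safe_lang p) (safe_lang q) \/ lang_incl (safe_lang q) (safe_lang p)) ->
    same_safe_comp p q.

Definition safe_minimal : Prop :=
  forall p q : Q, c_equiv p q ->
    (forall w, safe_lang p w <-> safe_lang q w) -> p = q.

Definition n_max : nat := \max_(q : Q) #|safe_comp q|.
End CB.

(* Main.v *)
Require Import Defs.
From mathcomp Require Import all_boot zify.
From Stdlib Require Import Classical ClassicalEpsilon FunctionalExtensionality.
Set Implicit Arguments. Unset Strict Implicit. Unset Printing Implicit Defensive.
Notation pfx := Defs.prefix.

Lemma pfx_take (T : Type) (w : word T) (s : seq T) d n :
  n <= size s -> (forall i, i < size s -> w i = nth d s i) -> pfx w n = take n s.
Proof.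
move=> Hn Hw; apply: (@eq_from_nth _ d).
  by rewrite size_mkseq size_take; case: ltnP => // H; apply/eqP; rewrite eqn_leq Hn H.
move=> i; rewrite size_mkseq => Hi.
by rewrite nth_mkseq // nth_take // Hw // (leq_trans Hi Hn).
Qed.

Lemma pfxS (T : Type) (w : word T) n : pfx w n.+1 = rcons (pfx w n) (w n).
Proof. exact: mkseqS. Qed.

Section Res.
Variables (Sigma : finType) (G : gcb_aut Sigma)
  (sigma : seq Sigma -> (gstate G * Sigma) * gstate G).
Hypothesis Hres : g_resolver sigma.

Definition st (u : seq Sigma) := if u is [::] then ginit G else (sigma u).2.

Lemma st_rcons u a : st (rcons u a) = (sigma (rcons u a)).2.
Proof. by case: u. Qed.

Lemma res_step u a : (sigma (rcons u a)).1.1 = st u /\ (sigma (rcons u a)).1.2 = a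
  /\ gdelta (st u) a (st (rcons u a)).
Proof.
pose w := fun i => nth a (rcons u a) i.
have Hp n : n <= size (rcons u a) -> pfx w n = take n (rcons u a).
  by move=> Hn; apply: pfx_take.
have [H0 [Hn _]] := Hres w.
have E : sigma (pfx w (size u).+1) = sigma (rcons u a).
  by rewrite Hp ?size_rcons // take_oversize // size_rcons.
have E1 : (sigma (rcons u a)).1.1 = st u.
  case/lastP E0: u => [|u' b]; rewrite E0 in E; first by rewrite -E.
  have [_ [_ H2]] := Hn (size u').
  rewrite -E size_rcons -H2 st_rcons.
  congr (_.2); congr sigma; rewrite Hp; last by rewrite E0 !size_rcons ltnW.
  by rewrite E0 -cats1 take_cat size_rcons ltnn subnn take0 cats0.
have [H1 [H2 _]] := Hn (size u).
rewrite E in H1 H2.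
have E2 : (sigma (rcons u a)).1.2 = a by rewrite H1 /w nth_rcons ltnn eqxx.
split => //; split => //.
by rewrite -E1 -{2}E2 st_rcons.
Qed.

Lemma res_acc w : g_lang G w -> exists c N, forall n, N <= n ->
  c \notin gcol (st (pfx w n)) (w n) (st (pfx w n.+1)).
Proof.
move=> Hw; have [_ [_ H]] := Hres w.
have [c [N HN]] := H Hw; exists c, N => n Hn.
have := HN n Hn; rewrite pfxS.
have [-> [-> _]] := res_step (pfx w n) (w n).
by rewrite st_rcons.
Qed.
End Res.

Definition wcons (T : Type) (a : T) (w : word T) := prepend [:: a] w.
Lemma wcons0 T (a : T) w : wcons a w 0 = a. Proof. by []. Qed.
Lemma wconsS T (a : T) w n : wcons a w n.+1 = w n.
Proof. by rewrite /wcons /prepend /= subSS subn0. Qed.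

Section Runs.
Variables (Sigma : finType) (G : gcb_aut Sigma).
Lemma run_cons s a s' w : gdelta s a s' -> g_accepts_from s' w ->
  g_accepts_from (A:=G) s (wcons a w).
Proof.
move=> Hd [r [[H0 Hr] [c [N HN]]]].
exists (fun n => if n is n'.+1 then r n' else s); split.
  split => // -[|n]; first by rewrite wcons0 H0.
  by rewrite wconsS; apply: Hr.
exists c, N.+1 => -[|n] // Hn; rewrite wconsS; exact: HN.
Qed.

Lemma run_uncons s a w : g_accepts_from (A:=G) s (wcons a w) ->
  exists s', gdelta s a s' /\ g_accepts_from s' w.
Proof.
move=> [r [[H0 Hr] [c [N HN]]]].
exists (r 1); split; first by have := Hr 0; rewrite H0 wcons0.
exists (fun n => r n.+1); split; first by split => // n; have := Hr n.+1; rewrite wconsS.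
by exists c, N => n Hn; have := HN n.+1 (leqW Hn); rewrite wconsS.
Qed.
End Runs.

Section Inf.
Variables (X T : Type) (hist : X -> seq T) (g : X -> X) (d : T) (x0 : X).
Hypothesis Hg : forall x, exists e, hist (g x) = hist x ++ e /\ 0 < size e.

Lemma hist_ext k m : exists e, hist (iter (m + k) g x0) = hist (iter k g x0) ++ e.
Proof.
elim: m => [|m [e IH]]; first by exists [::]; rewrite cats0.
have [e' [He' _]] := Hg (iter (m + k) g x0).
by exists (e ++ e'); rewrite addSn /= He' IH catA.
Qed.

Lemma size_hist k : k <= size (hist (iter k g x0)).
Proof.
elim: k => // k IH /=; have [e' [-> He]] := Hg (iter k g x0).
by rewrite size_cat -addn1 leq_add.
Qed.

Definition lim n := nth d (hist (iter n.+1 g x0)) n.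

Lemma limE k n : n < size (hist (iter k g x0)) -> lim n = nth d (hist (iter k g x0)) n.
Proof.
move=> Hn; rewrite /lim.
case: (leqP k n.+1) => Hk.
  have [e He] := hist_ext k (n.+1 - k); rewrite subnK // in He.
  by rewrite He nth_cat Hn.
have [e He] := hist_ext n.+1 (k - n.+1); rewrite subnK ?(ltnW Hk) // in He.
by rewrite He nth_cat; have := size_hist n.+1; case: ltnP.
Qed.

Lemma prefix_lim k m : m <= size (hist (iter k g x0)) ->
  pfx lim m = take m (hist (iter k g x0)).
Proof. by move=> Hm; apply: pfx_take => // i Hi; apply: limE. Qed.
End Inf.

Lemma choice_fun (X : Type) (R : X -> X -> Prop) :
  (forall x, exists y, R x y) -> exists g : X -> X, forall x, R x (g x).
Proof.
move=> H; exists (fun x => proj1_sig (constructive_indefinite_description _ (H x))).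
by move=> x; case: (constructive_indefinite_description _ _).
Qed.

Section Main.
Variables (Sigma : finType) (L : language Sigma) (B : gcb_aut Sigma) (A : cb_aut Sigma).
Hypotheses (HPI : prefix_independent L) (HrecB : g_recognises B L) (Hnice : nice A)
  (Hmin : safe_minimal A) (Hcen : safe_centralised A) (HrecA : c_recognises A L).
Variables (sigma : seq Sigma -> (gstate B * Sigma) * gstate B)
  (tau : seq Sigma -> (cstate A * Sigma) * cstate A).
Hypotheses (Hsig : g_resolver sigma) (Htau : g_resolver (A:=cb_to_gcb A) tau).

Local Notation Q := (cstate A).
Local Notation GA := (cb_to_gcb A).

Lemma lang_all (q : Q) w : c_lang_from q w <-> L w.
Proof.
have [Hreach [Hsd _]] := Hnice.
have Hstep (s : Q) a (s' : Q) : cdelta s a s' -> (forall w, c_lang_from s w <-> L w) ->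
    (forall w, c_lang_from s' w <-> L w).
  move=> Hd Hs w'; split.
    move=> H; have := @run_cons _ GA s a s' w' Hd H.
    by move/Hs; rewrite /wcons HPI.
  move=> H; have : L (wcons a w') by rewrite /wcons HPI.
  move/Hs => /(@run_uncons _ GA) [s'' [Hd' Hs'']].
  by apply/(Hsd s a s' s'' Hd Hd').
have := Hreach q; case/connectP => p Hp ->.
have H0 : forall w, c_lang_from (cinit A) w <-> L w by move=> w'; apply: (HrecA w').
elim: p (cinit A) Hp H0 {Hreach} w => [|s p IH] s0 //=.
case/andP => /existsP [a Ha] Hp Hs0 w.
apply: IH => //; exact: Hstep Ha Hs0.
Qed.

Lemma equiv_all (p q : Q) : c_equiv p q.
Proof. by move=> w; rewrite !lang_all. Qed.

Definition ss (q : Q) a (q' : Q) := cdelta q a q' && ~~ cb q a q'.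
Definition dl (q : Q) a : option Q := [pick q' | ss q a q'].

Lemma dlP q a q' : ss q a q' -> dl q a = Some q'.
Proof.
move=> H; rewrite /dl; case: pickP => [q'' H''|H'']; last by rewrite H'' in H.
have [_ [_ [_ Hsd]]] := Hnice.
case/andP: H => H1 H2; case/andP: H'' => H3 H4.
by congr Some; apply: Hsd H3 H4 H1 H2.
Qed.

Lemma dlS q a q' : dl q a = Some q' -> ss q a q'.
Proof. by rewrite /dl; case: pickP => // q'' H [<-]. Qed.

Definition dlf (o : option Q) a := if o is Some s then dl s a else None.
Definition dls (q : Q) (u : seq Sigma) := foldl dlf (Some q) u.

Lemma foldl_none u : foldl dlf None u = None.
Proof. by elim: u. Qed.

Lemma dls_cat q u v : dls q (u ++ v) = if dls q u is Some s then dls s v else None.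
Proof. by rewrite /dls foldl_cat; case: (foldl dlf (Some q) u) => // ; rewrite foldl_none. Qed.

Lemma dls_cons q a u : dls q (a :: u) = if dl q a is Some s then dls s u else None.
Proof. by rewrite -cat1s dls_cat. Qed.

Lemma dls_rcons q u a : dls q (rcons u a) = if dls q u is Some s then dl s a else None.
Proof. by rewrite -cats1 dls_cat; case: (dls q u) => //= s; case: (dl s a). Qed.

Definition Pref (q : Q) u := dls q u != None.

Lemma Pref_take q u n : Pref q u -> Pref q (take n u).
Proof.
rewrite /Pref -{1}(cat_take_drop n u) dls_cat.
by case: (dls q (take n u)).
Qed.

Lemma safe_Pref (q : Q) w : safe_lang q w <-> forall n, Pref q (pfx w n).
Proof.
split.
  move=> [r [H0 Hr]].
  suff H : forall n, dls q (pfx w n) = Some (r n) by move=> n; rewrite /Pref H.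
  elim => [|n IH]; first by rewrite H0.
  by rewrite pfxS dls_rcons IH (dlP (Hr n)).
move=> H.
exists (fun n => odflt q (dls q (pfx w n))); split => // n.
have := H n.+1; rewrite /Pref pfxS dls_rcons.
case: (dls q (pfx w n)) => //= s.
by case E: (dl s (w n)) => [s'|] //= _; apply: dlS.
Qed.

Lemma Pref_incl (q p : Q) : (forall y, Pref q y -> Pref p y) ->
  lang_incl (safe_lang q) (safe_lang p).
Proof. by move=> H w /safe_Pref Hw; apply/safe_Pref => n; apply: H. Qed.

Lemma Pref_comp (q p : Q) : (forall y, Pref q y -> Pref p y) -> same_safe_comp q p.
Proof. by move=> H; apply: Hcen; [apply: equiv_all | left; apply: Pref_incl]. Qed.

Lemma Pref_eq (q p : Q) : (forall y, Pref q y -> Pref p y) -> (forall y, Pref p y -> Pref q y) ->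
  q = p.
Proof.
move=> H1 H2; apply: Hmin; first exact: equiv_all.
by move=> w; split; [apply: Pref_incl | apply: Pref_incl].
Qed.

Lemma ss_comp (q : Q) a (q' : Q) : ss q a q' -> same_safe_comp q q'.
Proof.
have [_ [_ [Hnf _]]] := Hnice.
case/andP => H1 H2; apply/negPn/negP => H; have := Hnf _ _ _ H1 H.
by rewrite (negbTE H2).
Qed.

Lemma safe_acc (q : Q) w : safe_lang q w -> c_lang_from q w.
Proof.
move=> [r [H0 Hr]]; exists r; split.
  by split => // n; case/andP: (Hr n).
exists tt, 0 => n _ /=; case/andP: (Hr n) => _ /negbTE -> .
by rewrite in_set0.
Qed.

Variable s0 : Q.
Definition inS (q : Q) := same_safe_comp s0 q.

Lemma comp_trans (p q r : Q) : same_safe_comp p q -> same_safe_comp q r -> same_safe_comp p r.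
Proof.
case/andP => H1 H2 /andP [H3 H4]; apply/andP; split; first exact: connect_trans H1 H3.
exact: connect_trans H4 H2.
Qed.

Lemma comp_sym (p q : Q) : same_safe_comp p q -> same_safe_comp q p.
Proof. by case/andP => H1 H2; apply/andP. Qed.

Local Notation beta := (st sigma).
Local Notation alpha := (@st _ GA tau).

Lemma beta_step h a : gdelta (beta h) a (beta (rcons h a)).
Proof. by have [_ [_ ->]] := res_step Hsig h a. Qed.

Definition good c h (q : Q) := inS q /\ forall y a, Pref q (rcons y a) ->
  c \notin gcol (beta (h ++ y)) a (beta (h ++ rcons y a)).

Lemma good_step c h q a q' : good c h q -> dl q a = Some q' -> good c (rcons h a) q'.
Proof.
move=> [HS Hg] Hd; split.
  exact: comp_trans HS (ss_comp (dlS Hd)).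
move=> y a' Hp; have := Hg (a :: y) a'.
by rewrite /Pref /= dls_cons Hd -!cat_rcons; apply.
Qed.

Lemma good_walk c h q x q' : good c h q -> dls q x = Some q' -> good c (h ++ x) q'.
Proof.
elim: x h q => [|a x IH] h q Hg /=; first by rewrite cats0 => -[<-].
rewrite dls_cons; case E: (dl q a) => [s|] // Hx.
by rewrite -cat_rcons; apply: IH Hx; apply: good_step E.
Qed.

Definition E c b a b' := exists h q, good c h q /\ beta h = b /\ Pref q [:: a] /\
  beta (rcons h a) = b'.

Fixpoint Wpath c b (l : seq (Sigma * gstate B)) : Prop :=
  if l is (a, b') :: l' then E c b a b' /\ Wpath c b' l' else True.

Definition W c b y := exists l, Wpath c b l /\ map fst l = y.
Definition Rg c b := exists h q, good c h q /\ beta h = b.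

Lemma E_props c b a b' : E c b a b' -> [/\ gdelta b a b', c \notin gcol b a b' & Rg c b'].
Proof.
move=> [h [q [[HS Hg] [<- [Hp <-]]]]]; split.
- exact: beta_step.
- by have := Hg [::] a Hp; rewrite cats0 cats1.
- move: Hp; rewrite /Pref dls_cons; case E0: (dl q a) => [s|] // _.
  by exists (rcons h a), s; split => //; apply: good_step E0.
Qed.

Lemma good_E c h q a q' : good c h q -> dl q a = Some q' -> E c (beta h) a (beta (rcons h a)).
Proof. by move=> Hg Hd; exists h, q; rewrite /Pref dls_cons Hd. Qed.

Lemma W_cons c b a b' y : E c b a b' -> W c b' y -> W c b (a :: y).
Proof. by move=> He [l [Hl <-]]; exists ((a, b') :: l). Qed.

Lemma good_W c h q y : good c h q -> Pref q y -> W c (beta h) y.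
Proof.
elim: y h q => [|a y IH] h q Hg; first by exists [::].
rewrite /Pref dls_cons; case E0: (dl q a) => [s|] // Hp.
apply: W_cons (good_E Hg E0) _; apply: IH Hp; exact: good_step E0.
Qed.

Lemma W_walk c h q x q' y : good c h q -> dls q x = Some q' ->
  W c (beta (h ++ x)) y -> W c (beta h) (x ++ y).
Proof.
elim: x h q => [|a x IH] h q Hg /=; first by rewrite cats0.
rewrite dls_cons; case E0: (dl q a) => [s|] // Hx.
rewrite -cat_rcons => HW; apply: W_cons (good_E Hg E0) _.
exact: IH (good_step Hg E0) Hx HW.
Qed.

Lemma Wpath_cat c b l1 l2 : Wpath c b (l1 ++ l2) <->
  Wpath c b l1 /\ Wpath c (last b (map snd l1)) l2.
Proof.
elim: l1 b => [|[a b'] l1 IH] b /=; first by split => // -[].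
rewrite IH; tauto.
Qed.

Definition Exact c b (p : Q) := (exists h, good c h p /\ beta h = b) /\
  forall y, W c b y -> Pref p y.

Lemma exact_step c b p a p' : Exact c b p -> dl p a = Some p' -> exists b', Exact c b' p'.
Proof.
move=> [[h [Hg <-]] HW] Hd; exists (beta (rcons h a)); split.
  by exists (rcons h a); split => //; apply: good_step Hd.
move=> y Hy; have := HW _ (W_cons (good_E Hg Hd) Hy).
by rewrite /Pref dls_cons Hd.
Qed.

Lemma exact_walk c b p x t : Exact c b p -> dls p x = Some t -> exists b', Exact c b' t.
Proof.
elim: x b p => [|a x IH] b p He /=; first by move=> [<-]; exists b.
rewrite dls_cons; case E0: (dl p a) => [s|] // Hx.
have [b' Hb'] := exact_step He E0; exact: IH Hb' Hx.
Qed.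

Lemma connect_dls (p t : Q) : connect (@safe_edge _ A) p t -> exists x, dls p x = Some t.
Proof.
case/connectP => s Hs ->; elim: s p Hs => [|s1 s IH] p /=; first by exists [::].
case/andP => /existsP [a Ha] Hs; have [x Hx] := IH _ Hs.
by exists (a :: x); rewrite dls_cons (dlP Ha).
Qed.

Lemma exact_inj c b p p' : Exact c b p -> Exact c b p' -> p = p'.
Proof.
move=> [[h [Hg Hb]] H1] [[h' [Hg' Hb']] H2].
apply: Pref_eq => y Hy.
  by apply: H2; rewrite -Hb; apply: good_W Hg Hy.
by apply: H1; rewrite -Hb'; apply: good_W Hg' Hy.
Qed.

Definition lePref (q p : Q) : bool :=
  if excluded_middle_informative (forall y, Pref q y -> Pref p y) then true else false.

Lemma lePrefP q p : lePref q p <-> (forall y, Pref q y -> Pref p y).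
Proof. by rewrite /lePref; case: excluded_middle_informative. Qed.

Definition msr (q : Q) := #|[set q'' | lePref q'' q]|.

Lemma dom_step c h q p : good c h q -> (forall y, W c (beta h) y -> Pref p y) -> q != p ->
  msr q < msr p /\ exists h' p', good c h' p /\ (forall y, W c (beta h') y -> Pref p' y).
Proof.
move=> Hg Hd Hne.
have Hqp : forall y, Pref q y -> Pref p y by move=> y Hy; apply: Hd; apply: good_W Hg Hy.
split.
  apply: proper_card; apply/properP; split.
    apply/subsetP => r; rewrite !inE => /lePrefP Hr; apply/lePrefP => y Hy.
    by apply: Hqp; apply: Hr Hy.
  exists p; rewrite !inE; first by apply/lePrefP.
  by apply/negP => /lePrefP Hpq; move/eqP: Hne; apply; apply: Pref_eq.
have [x Hx] := connect_dls (proj1 (andP (Pref_comp Hqp))).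
have : Pref p x by apply: Hqp; rewrite /Pref Hx.
rewrite /Pref; case E0: (dls p x) => [p'|] // _.
exists (h ++ x), p'; split; first exact: good_walk Hg Hx.
move=> y Hy; have := Hd _ (W_walk Hg Hx Hy).
by rewrite /Pref dls_cat E0.
Qed.

Lemma dom_exact c h q p : good c h q -> (forall y, W c (beta h) y -> Pref p y) ->
  exists b t, Exact c b t.
Proof.
move=> Hg Hd.
suff H : forall k h q p, #|Q| - msr q <= k -> good c h q ->
   (forall y, W c (beta h) y -> Pref p y) -> exists b t, Exact c b t.
  exact: H (leqnn _) Hg Hd.
elim => [|k IH] {Hg Hd}h {}q {}p Hk Hg Hd;
  (case: (eqVneq q p) => [Eqp|Hne]; first by rewrite -Eqp in Hd; exists (beta h), q; split => //; exists h);
  have [Hlt [h' [p' [Hg' Hd']]]] := dom_step Hg Hd Hne;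
  have := max_card [set q'' | lePref q'' p]; rewrite -/(msr p) => Hm.
  lia.
apply: IH Hg' Hd'; lia.
Qed.

Lemma choice_fun2 (X Y : Type) (R : X -> Y -> Prop) :
  (forall x, exists y, R x y) -> exists g : X -> Y, forall x, R x (g x).
Proof.
move=> H; exists (fun x => proj1_sig (constructive_indefinite_description _ (H x))).
by move=> x; case: (constructive_indefinite_description _ _).
Qed.

Lemma count_exact : (exists c b p, Exact c b p) -> #|safe_comp s0| <= #|gstate B|.
Proof.
move=> [c [b [p He]]].
have HSp : inS p by case: He => -[h [[]]].
have Hall t : t \in safe_comp s0 -> exists b', Exact c b' t.
  rewrite inE => Ht; have := comp_trans (comp_sym HSp) Ht.
  case/andP => /connect_dls [x Hx] _; exact: exact_walk He Hx.
have Hex : forall t, exists b', t \in safe_comp s0 -> Exact c b' t.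
  move=> t; case: (boolP (t \in safe_comp s0)) => Ht.
    by have [b' Hb'] := Hall t Ht; exists b'.
  by exists (ginit B) => H; case/negP: Ht.
have [f Hf] := choice_fun2 Hex.
rewrite -(@card_in_imset _ _ f); first exact: max_card.
move=> t1 t2 H1 H2 E12; apply: exact_inj (Hf _ H1) _; rewrite E12; exact: Hf.
Qed.

Definition Live := forall q, inS q -> exists a q', dl q a = Some q'.

Lemma inS_walk q x q' : inS q -> dls q x = Some q' -> inS q'.
Proof.
elim: x q => [|a x IH] q HS /=; first by move=> [<-].
rewrite dls_cons; case E0: (dl q a) => [s|] // Hx.
apply: IH Hx; exact: comp_trans HS (ss_comp (dlS E0)).
Qed.

Definition hit c h y := exists y1 a y2, y = y1 ++ a :: y2 /\
  c \in gcol (beta (h ++ y1)) a (beta (h ++ rcons y1 a)).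

Lemma notgood c h q : inS q -> ~ good c h q -> exists y a, Pref q (rcons y a) /\
  c \in gcol (beta (h ++ y)) a (beta (h ++ rcons y a)).
Proof.
move=> HS Hn; apply: NNPP => Hn'; apply: Hn; split => // y a Hp.
by apply/negP => Hc; apply: Hn'; exists y, a.
Qed.

Lemma hit_all (Hl : Live) (Hng : forall c h q, ~ good c h q) (cs : seq (gcolour B)) h q : inS q ->
  exists y, Pref q y /\ 0 < size y /\ forall c, c \in cs -> hit c h y.
Proof.
elim: cs h q => [|c cs IH] h q HS.
  have [a [q' Hq']] := Hl q HS.
  by exists [:: a]; rewrite /Pref dls_cons Hq'.
have [y1 [a [Hp Hc]]] := notgood HS (Hng c h q).
move: Hp; rewrite /Pref; case E0: (dls q (rcons y1 a)) => [q1|] // _.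
have [y2 [Hp2 [_ Hh2]]] := IH (h ++ rcons y1 a) q1 (inS_walk HS E0).
exists (rcons y1 a ++ y2); split; first by rewrite /Pref dls_cat E0.
split; first by rewrite size_cat size_rcons.
move=> c'; rewrite inE => /orP [/eqP ->|Hc'].
  by exists y1, a, y2; rewrite cat_rcons.
have [y1' [a' [y2' [E1 Hc1]]]] := Hh2 c' Hc'.
exists (rcons y1 a ++ y1'), a', y2'; split; first by rewrite E1 catA.
by rewrite !catA rcons_cat catA.
Qed.

Lemma inS0 : inS s0.
Proof. by rewrite /inS /same_safe_comp connect0. Qed.

Lemma exists_good (Hl : Live) : exists c h q, good c h q.
Proof.
apply: NNPP => Hn.
have Hng : forall c h q, ~ good c h q by move=> c h q Hg; apply: Hn; exists c, h, q.
have [a0 [q1 _]] := Hl s0 inS0.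
pose R (x x' : seq Sigma * Q) := exists y, x'.1 = x.1 ++ y /\ 0 < size y /\
  (inS x.2 -> dls x.2 y = Some x'.2 /\ forall c, hit c x.1 y).
have HR : forall x, exists x', R x x'.
  move=> [h q]; case: (boolP (inS q)) => HS.
    have [y [Hp [Hy Hh]]] := hit_all Hl Hng (enum (gcolour B)) h HS.
    move: Hp; rewrite /Pref; case E0: (dls q y) => [q'|] // _.
    exists (h ++ y, q'), y; split => //; split => // _; split => // c.
    by apply: Hh; rewrite mem_enum.
  exists (h ++ [:: a0], q), [:: a0]; split => //; split => // H.
  by rewrite H in HS.
have [g Hg] := choice_fun HR.
have Hg' : forall x, exists e, (g x).1 = x.1 ++ e /\ 0 < size e.
  by move=> x; have [y [? [? _]]] := Hg x; exists y.
pose x0 := ([::] : seq Sigma, s0).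
pose xs k := iter k g x0.
have Inv : forall k, inS (xs k).2 /\ dls s0 (xs k).1 = Some (xs k).2.
  elim => [|k [HS Hd]]; first by split => //; apply: inS0.
  have [y [E1 [_ H]]] := Hg (xs k); have [Hy _] := H HS.
  rewrite /xs /= -/(xs k) E1 dls_cat Hd; split => //; exact: inS_walk HS Hy.
pose w := lim (fun x : seq Sigma * Q => x.1) g a0 x0.
have Hsafe : safe_lang s0 w.
  apply/safe_Pref => n; rewrite (prefix_lim a0 (x0:=x0) Hg' (k:=n)); last exact: size_hist.
  by apply: Pref_take; rewrite /Pref (proj2 (Inv n)).
have HL : L w by apply/(lang_all s0)/safe_acc.
have [c [N HN]] := res_acc Hsig (proj2 (HrecB w) HL).
have [y [E1 [_ H]]] := Hg (xs N).
have [_ Hh] := H (proj1 (Inv N)).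
have [y1 [a [y2 [Ey Hc]]]] := Hh c.
set h := (xs N).1 in E1 Hc.
have Hsz : N <= size h by exact: size_hist.
have E2 : (xs N.+1).1 = (h ++ y1) ++ a :: y2 by rewrite /xs /= E1 Ey catA.
pose n := size (h ++ y1).
have Hsn : n.+1 <= size (xs N.+1).1 by rewrite E2 size_cat /= addnS ltnS leq_addr.
have P1 : pfx w n = h ++ y1.
  by rewrite (prefix_lim a0 (x0:=x0) Hg' (k:=N.+1)) ?(ltnW Hsn) // E2 take_size_cat.
have P2 : pfx w n.+1 = h ++ rcons y1 a.
  rewrite (prefix_lim a0 (x0:=x0) Hg' (k:=N.+1)) // E2 -cat_rcons.
  by rewrite take_size_cat; [rewrite rcons_cat | rewrite size_rcons].
have Pw : w n = a.
  by rewrite /w (limE a0 (x0:=x0) Hg' (k := N.+1)) // E2 nth_cat ltnn subnn.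
have Hn' : N <= n by rewrite /n size_cat (leq_trans Hsz) ?leq_addr.
by have := HN n Hn'; rewrite P1 P2 Pw Hc.
Qed.

Fixpoint runOK b (l : seq (Sigma * gstate B)) : Prop :=
  if l is (a, b') :: l' then gdelta b a b' /\ runOK b' l' else True.
Fixpoint cOK c b (l : seq (Sigma * gstate B)) : Prop :=
  if l is (a, b') :: l' then c \notin gcol b a b' /\ cOK c b' l' else True.

Lemma runOK_cat b l1 l2 : runOK b (l1 ++ l2) <-> runOK b l1 /\ runOK (last b (map snd l1)) l2.
Proof. elim: l1 b => [|[a b'] l1 IH] b /=; first by tauto. rewrite IH; tauto. Qed.

Lemma cOK_cat c b l1 l2 : cOK c b (l1 ++ l2) <-> cOK c b l1 /\ cOK c (last b (map snd l1)) l2.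
Proof. elim: l1 b => [|[a b'] l1 IH] b /=; first by tauto. rewrite IH; tauto. Qed.

Lemma Wpath_ok c b l : Wpath c b l ->
  [/\ runOK b l, cOK c b l & (0 < size l -> Rg c (last b (map snd l)))].
Proof.
elim: l b => [|[a b'] l IH] b //= [HE HW].
have [H1 H2 H3] := E_props HE; have [H4 H5 H6] := IH _ HW.
split => // _; case: l {IH HW H4 H5} H6 => [|x l] /=; first by [].
by apply.
Qed.

Section WithD.
Variable d : Sigma * gstate B.

Definition rr b (l : seq (Sigma * gstate B)) n := if n is n'.+1 then (nth d l n').2 else b.

Lemma rr_cons b a b' l n : rr b ((a, b') :: l) n.+1 = rr b' l n.
Proof. by case: n. Qed.

Lemma runOK_nth b l n : runOK b l -> n < size l -> gdelta (rr b l n) (nth d l n).1 (rr b l n.+1).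
Proof.
elim: l b n => [|[a b'] l IH] b n //= [H1 H2]; case: n => [|n] //= Hn.
by have := IH b' n H2 Hn; case: n {Hn IH}.
Qed.

Lemma cOK_nth c b l n : cOK c b l -> n < size l -> c \notin gcol (rr b l n) (nth d l n).1 (rr b l n.+1).
Proof.
elim: l b n => [|[a b'] l IH] b n //= [H1 H2]; case: n => [|n] //= Hn.
by have := IH b' n H2 Hn; case: n {Hn IH}.
Qed.

Lemma rr_cat b l1 l2 i : rr b (l1 ++ l2) (size l1 + i) = rr (last b (map snd l1)) l2 i.
Proof.
elim: l1 b => [|[a b'] l1 IH] b //=.
by rewrite -IH; case: (size l1 + i).
Qed.
End WithD.

Fixpoint resl (pre h : seq Sigma) : seq (Sigma * gstate B) :=
  if h is a :: h' then (a, beta (rcons pre a)) :: resl (rcons pre a) h' else [::].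

Lemma resl_props pre h : [/\ map fst (resl pre h) = h, runOK (beta pre) (resl pre h),
  last (beta pre) (map snd (resl pre h)) = beta (pre ++ h) & size (resl pre h) = size h].
Proof.
elim: h pre => [|a h IH] pre /=; first by rewrite cats0.
have [H1 H2 H3 H4] := IH (rcons pre a).
by rewrite H1 H3 H4 cat_rcons; split => //; split => //; apply: beta_step.
Qed.

Lemma notdom c b p : ~ (forall y, W c b y -> Pref p y) -> exists y, W c b y /\ ~~ Pref p y.
Proof.
move=> H; apply: NNPP => H'; apply: H => y Hy; case E0: (Pref p y) => //.
by case: H'; exists y; rewrite E0.
Qed.

Lemma alpha_Pref u y : (forall y1 a y2, y = y1 ++ a :: y2 ->
  ~~ cb (alpha (u ++ y1)) a (alpha (u ++ rcons y1 a))) -> dls (alpha u) y = Some (alpha (u ++ y)).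
Proof.
elim/last_ind: y => [|y a IH] H; first by rewrite cats0.
rewrite dls_rcons IH; last first.
  by move=> y1 a1 y2 E0; apply: (H y1 a1 (rcons y2 a)); rewrite E0 rcons_cat.
apply: dlP; apply/andP; split.
  by have [_ [_ Hd]] := res_step Htau (u ++ y) a; rewrite rcons_cat in Hd.
by apply: (H y a [::]); rewrite cats1.
Qed.

Definition lastst (l : seq (Sigma * gstate B)) := last (ginit B) (map snd l).

Lemma exists_dom c h0 q0 (a0 : Sigma) : good c h0 q0 ->
  exists h q p, good c h q /\ (forall y, W c (beta h) y -> Pref p y).
Proof.
move=> Hg0; apply: NNPP => Hno.
have Hnd : forall h q p, good c h q -> exists y, W c (beta h) y /\ ~~ Pref p y.
  move=> h q p Hg; apply: notdom => Hd; apply: Hno; exists h, q, p; split => //.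
pose d := (a0, ginit B).
pose x0 := resl [::] h0.
have [Hr1 Hr2 Hr3 Hr4] := resl_props [::] h0.
pose Inv l := exists rest, l = x0 ++ rest /\ cOK c (beta h0) rest /\ runOK (ginit B) l /\
  Rg c (lastst l).
pose R (l l' : seq (Sigma * gstate B)) := exists e, l' = l ++ e /\ 0 < size e /\
  (Inv l -> Inv l' /\ ~~ Pref (alpha (map fst l)) (map fst e)).
have HR : forall l, exists l', R l l'.
  move=> l; case: (classic (Inv l)) => HI; last first.
    by exists (l ++ [:: d]), [:: d]; split => //; split => // H; case: HI.
  have [rest [El [Hc [Hr [h [q [Hg Hb]]]]]]] := HI.
  have [y [[e [He Hey]] Hy]] := Hnd h q (alpha (map fst l)) Hg.
  have Hse : 0 < size e.
    by move: Hy; rewrite -Hey; case: e {He Hey}.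
  have [He1 He2 He3] := Wpath_ok He.
  exists (l ++ e), e; split => //; split => // _; split; last by rewrite Hey.
  have Hlast : last (beta h0) (map snd rest) = lastst l.
    by rewrite /lastst El map_cat last_cat Hr3.
  exists (rest ++ e); split; first by rewrite El catA.
  split; first by apply/cOK_cat; rewrite Hlast -Hb.
  split; first by apply/runOK_cat; rewrite -/(lastst l) -Hb.
  by rewrite /lastst map_cat last_cat -/(lastst l) -Hb; apply: He3.
have [g Hg] := choice_fun HR.
have Hg' : forall x, exists e, (fun l => l) (g x) = x ++ e /\ 0 < size e.
  by move=> x; have [e [? [? _]]] := Hg x; exists e.
pose xs k := iter k g x0.
have Inv0 : Inv x0.
  exists [::]; rewrite cats0; split => //; split => //; split => //.
  by exists h0, q0; split => //; rewrite /lastst Hr3.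
have InvK : forall k, Inv (xs k).
  elim => // k IH; have [e [E1 [_ H]]] := Hg (xs k).
  by rewrite /xs /= -/(xs k); have [] := H IH.
pose lm := lim (fun l => l) g d x0.
pose w := fun n => (lm n).1.
pose r := fun n => if n is n'.+1 then (lm n').2 else ginit B.
have Hsz : forall k, k <= size (xs k) by move=> k; apply: (size_hist x0 Hg' k).
have Er : forall k n, n <= size (xs k) -> r n = rr d (ginit B) (xs k) n.
  move=> k [|n] Hn //=; by rewrite /r /lm (limE d Hg' (k:=k)).
have Ew : forall k n, n < size (xs k) -> w n = (nth d (xs k) n).1.
  by move=> k n Hn; rewrite /w /lm (limE d Hg' (k:=k)).
have HB : g_lang B w.
  exists r; split.
    split => // n; rewrite (Er n.+1 n) ?(ltnW (Hsz n.+1)) ?(Er n.+1 n.+1) ?(Ew n.+1) //.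
    by apply: runOK_nth => //; have [rest [_ [_ [? _]]]] := InvK n.+1.
  exists c, (size h0) => n Hn.
  have [rest [E1 [Hc _]]] := InvK n.+1.
  have Hn' := Hsz n.+1.
  rewrite (Er n.+1 n) ?(ltnW Hn') // (Er n.+1 n.+1) // (Ew n.+1) //.
  rewrite E1 -(subnKC Hn) -Hr4 -addnS !rr_cat Hr3 nth_cat ltnNge leq_addr /= addKn.
  apply: cOK_nth => //.
  move: Hn'; rewrite E1 size_cat Hr4 -{1}(subnKC Hn) -addnS leq_add2l //.
have HL : L w by apply/HrecB.
have [c' [N HN]] := res_acc Htau (proj2 (HrecA w) HL).
have [e [E1 [_ H]]] := Hg (xs N).
have [_ Hpe] := H (InvK N).
pose u := map fst (xs N).
have : exists y1 a y2, map fst e = y1 ++ a :: y2 /\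
    cb (alpha (u ++ y1)) a (alpha (u ++ rcons y1 a)).
  apply: NNPP => Hn; move: Hpe; rewrite /Pref alpha_Pref //.
  move=> y1 a y2 Ey; apply/negP => Hcb; apply: Hn; exists y1, a, y2; split => //.
move=> [y1 [a [y2 [Ey Hcb]]]].
have E2 : map fst (xs N.+1) = (u ++ y1) ++ a :: y2.
  by rewrite /xs /= E1 map_cat Ey catA.
pose n := size (u ++ y1).
have Hsn : n < size (xs N.+1).
  by rewrite -(size_map fst) E2 size_cat /= addnS ltnS leq_addr.
have Hpw : forall m, m <= size (xs N.+1) -> pfx w m = take m (map fst (xs N.+1)).
  move=> m Hm; rewrite -map_take -(prefix_lim d Hg' Hm).
  by rewrite /Defs.prefix /mkseq -map_comp.
have P1 : pfx w n = u ++ y1 by rewrite Hpw ?(ltnW Hsn) // E2 take_size_cat.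
have P2 : pfx w n.+1 = u ++ rcons y1 a.
  rewrite Hpw // E2 -cat_rcons.
  by rewrite take_size_cat; [rewrite rcons_cat | rewrite size_rcons].
have Pw : w n = a.
  rewrite (Ew N.+1) // -(nth_map d d.1 fst) // E2 nth_cat ltnn subnn //.
have Hn' : N <= n by rewrite /n /u size_cat size_map (leq_trans (Hsz N)) ?leq_addr.
have := HN n Hn'; rewrite P1 P2 Pw /= Hcb.
by rewrite in_setT.
Qed.

Lemma comp_bound (HS2 : 1 < #|safe_comp s0|) : #|safe_comp s0| <= #|gstate B|.
Proof.
have Hl : Live.
  move=> q HS.
  have [t Ht Htq] : exists2 t, t \in safe_comp s0 & t != q.
    apply: NNPP => Hn; move: HS2; rewrite ltnNge => /negP; apply.
    rewrite -(cards1 q); apply: subset_leq_card; apply/subsetP => t Ht.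
    rewrite inE; apply/negPn/negP => Htq; apply: Hn; by exists t.
  have : same_safe_comp q t by apply: comp_trans (comp_sym HS) _; rewrite inE in Ht.
  case/andP => /connectP [[|s1 s] /= Hp Et _]; first by rewrite Et eqxx in Htq.
  case/andP: Hp => /existsP [a Ha] _; exists a, s1; exact: dlP.
have [a0 _] := Hl s0 inS0.
have [c [h [q Hg]]] := exists_good Hl.
have [h' [q' [p [Hg' Hd]]]] := exists_dom a0 Hg.
have [b [t He]] := dom_exact Hg' Hd.
apply: count_exact; by exists c, b, t.
Qed.
End Main.

Theorem proposition21 (Sigma : finType) (L : language Sigma)
  (B : gcb_aut Sigma) (Amin : cb_aut Sigma) :
  prefix_independent L ->
  g_history_deterministic B -> g_recognises B L ->
  nice Amin -> safe_minimal Amin -> safe_centralised Amin ->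
  c_history_deterministic Amin -> c_recognises Amin L ->
  n_max Amin <= #|gstate B|.
Proof.
move=> HPI [sigma Hsig] HrecB Hnice Hmin Hcen [tau Htau] HrecA.
apply/bigmax_leqP => q _.
case: (leqP #|safe_comp q| 1) => H.
  by apply: leq_trans H _; apply/card_gt0P; exists (ginit B).
exact: (comp_bound HPI HrecB Hnice Hmin Hcen HrecA Hsig Htau H).
Qed.
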